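(* Let $G=(V,E)$ be a connected undirected unweighted graph in which every node has a self-loop, let $S\subseteq V$, and let $X\subseteq V$ be a configuration with $X\cap S\neq\emptyset$. Then $\operatorname{fp}^{\infty}(G^S,X)=1$.
   Context: Positional Voter model. A graph $G=(V,E,w)$ has node set $V$ with $|V|=n$, edge set $E\subseteq V\times V$ and weights $w\colon E\to\mathbb{R}_{>0}$; $\operatorname{in}(u)=\{v\in V:(v,u)\in E\}$. ''Undirected unweighted'' means $E$ is symmetric and $w\equiv 1$; ''self-loop at $u$'' means $(u,u)\in E$. A configuration is a set $X\subseteq V$ (the nodes carrying the novel trait $A$). Given a biased set $S\subseteq V$ and bias $\delta\ge 0$, define $f^S_X(v\mid u)=1+\delta$ if $v\in X$ and $u\in S$, and $1$ otherwise. The process $(\mathcal{X}_t)_{t\ge0}$: given $\mathcal{X}_t=X$, a node $u$ is chosen uniformly at random from $V$, then $v\in\operatorname{in}(u)$ is chosen with probability $\frac{f^S_X(v\mid u)\,w(v,u)}{\sum_{x\in\operatorname{in}(u)} f^S_X(x\mid u)\,w(x,u)}$, and $\mathcal{X}_{t+1}=X\cup\{u\}$ if $v\in X$, $\mathcal{X}_{t+1}=X\setminus\{u\}$ otherwise. Define $\operatorname{fp}(G^S,\delta,X)=\mathbb{P}[\exists t\ge0:\mathcal{X}_t=V\mid\mathcal{X}_0=X]$ and $\operatorname{fp}^{\infty}(G^S,X)=\lim_{\delta\to\infty}\operatorname{fp}(G^S,\delta,X)$. *)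

(* Defs.v *)
From HB Require Import structures.
From mathcomp Require Import all_boot all_order all_algebra.
From mathcomp Require Import all_classical all_reals all_analysis.
Set Implicit Arguments. Unset Strict Implicit. Unset Printing Implicit Defensive.
Import Order.TTheory GRing.Theory Num.Theory numFieldNormedType.Exports.
Local Open Scope ring_scope.

Section PositionalVoter.
Variables (R : realType) (T : finType).
(* e v u  <->  (v,u) \in E ;  in(u) = [set v | e v u] ;  w = edge weights *)
Variables (e : rel T) (w : T -> T -> R) (S : {set T}) (delta : R).

Definition bias (X : {set T}) (v u : T) : R :=
  if (v \in X) && (u \in S) then 1 + delta else 1.

Definition norm_in (X : {set T}) (u : T) : R :=
  \sum_(x | e x u) bias X x u * w x u.

(* configuration after u copies the trait of v *)
Definition update (X : {set T}) (u v : T) : {set T} :=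
  if v \in X then u |: X else X :\ u.

Definition trans (X Y : {set T}) : R :=
  \sum_u \sum_(v | e v u)
     (#|T|%:R)^-1 * (bias X v u * w v u / norm_in X u)
       * (update X u v == Y)%:R.

Fixpoint hit_within (t : nat) (X : {set T}) : R :=
  match t with
  | 0 => (X == [set: T]%SET)%:R
  | t'.+1 => if X == [set: T]%SET then 1 else \sum_Y trans X Y * hit_within t' Y
  end.

(* fp(G^S, delta, X) = P[exists t, X_t = V | X_0 = X]
   = lim_t P[X hits V within t steps] (continuity of measure) *)
Definition fp (X : {set T}) : R := limn (fun t => hit_within t X).

End PositionalVoter.

Definition undirected_selfloop_connected (T : finType) (e : rel T) : Prop :=
  symmetric e /\ (forall u, e u u) /\ (forall u v, connect e u v).

(* Main.v *)
Require Import Defs.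
From HB Require Import structures.
From mathcomp Require Import all_boot all_order all_algebra.
From mathcomp Require Import all_classical all_reals all_analysis.
From mathcomp Require Import ring lra.
Import Order.TTheory GRing.Theory Num.Theory numFieldNormedType.Exports.
Local Open Scope ring_scope.

Section PV.
Variables (R : realType) (T : finType) (e : rel T) (S : {set T}) (delta : R).
Hypothesis erefl' : forall u, e u u.
Hypothesis dpos : 0 <= delta.

Local Notation W := (fun _ _ : T => (1 : R)).
Local Notation N := (#|T|%:R : R).
Local Notation nm X u := (norm_in e W S delta X u).

Definition coef X u v : R := N^-1 * (bias S delta X v u * 1 / nm X u).

Lemma bias_ge1 X v u : 1 <= bias S delta X v u.
Proof. rewrite /bias; case: ifP => _; [rewrite lerDl |]; done. Qed.

Lemma norm_ge X u : bias S delta X u u <= nm X u.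
Proof.
rewrite /norm_in (bigD1 u) //= mulr1 lerDl; apply: sumr_ge0 => x _.
by rewrite mulr1; apply: le_trans (bias_ge1 _ _ _).
Qed.

Lemma norm_gt0 X u : 0 < nm X u.
Proof. by apply: lt_le_trans (norm_ge X u); apply: lt_le_trans (bias_ge1 _ _ _). Qed.

Lemma sum_in X u : \sum_(v | e v u) bias S delta X v u * 1 / nm X u = 1.
Proof. by rewrite -mulr_suml divff // gt_eqF // norm_gt0. Qed.

Lemma coef_ge0 X u v : 0 <= coef X u v.
Proof.
rewrite /coef mulr_ge0 ?invr_ge0 ?ler0n // mulr1 divr_ge0 ?(ltW (norm_gt0 _ _)) //.
by apply: le_trans (bias_ge1 _ _ _).
Qed.

Lemma coef_sum X : (0 < #|T|)%N -> \sum_u \sum_(v | e v u) coef X u v = 1.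
Proof.
move=> hT.
transitivity (\sum_(u : T) N^-1).
  by apply: eq_bigr => u _; rewrite /coef -mulr_sumr sum_in mulr1.
by rewrite sumr_const -[X in X = _]mulr_natr mulVf // pnatr_eq0 -lt0n.
Qed.

Lemma trans_sum X (F : {set T} -> R) :
  \sum_Y trans e W S delta X Y * F Y = \sum_u \sum_(v | e v u) coef X u v * F (update X u v).
Proof.
rewrite /trans.
under eq_bigr do rewrite mulr_suml.
rewrite exchange_big; apply: eq_bigr => u _.
under eq_bigr do rewrite mulr_suml.
rewrite exchange_big; apply: eq_bigr => v _.
rewrite (bigD1 (update X u v)) //= eqxx [_ * true%:R]mulr1 big1 ?addr0 //.
by move=> Y /negbTE hY; rewrite eq_sym hY mulr0 mul0r.
Qed.

Hypothesis hT : (0 < #|T|)%N.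
Hypothesis esym : symmetric e.
Hypothesis econn : forall u v, connect e u v.

Local Notation h t X := (hit_within e W S delta t X).

Lemma h_full t : h t [set: T]%SET = 1.
Proof. by case: t => [|t] /=; rewrite eqxx. Qed.

Lemma h_step t X : X != [set: T]%SET ->
  h t.+1 X = \sum_u \sum_(v | e v u) coef X u v * h t (update X u v).
Proof. by move=> hX; rewrite /= (negbTE hX) trans_sum. Qed.

Lemma h_bnd t X : 0 <= h t X <= 1.
Proof.
elim: t X => [|t IH] X /=; first by case: (X == _); rewrite ?ler01 ?lexx.
case: ifP => hX; first by rewrite ler01 lexx.
rewrite trans_sum; apply/andP; split.
  apply: sumr_ge0 => u _; apply: sumr_ge0 => v _; apply: mulr_ge0;
    [exact: coef_ge0 | by case/andP: (IH (update X u v))].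
have cs := coef_sum X hT.
apply: le_trans (_ : _ <= \sum_u \sum_(v | e v u) coef X u v) _; last by rewrite cs.
apply: ler_sum => u _; apply: ler_sum => v _.
by apply: ler_piMr; [exact: coef_ge0 | case/andP: (IH (update X u v))].
Qed.

Lemma h_mono t X : h t X <= h t.+1 X.
Proof.
elim: t X => [|t IH] X.
  move: (h_bnd 1 X); rewrite /=; case: ifP => hX /andP[h0 _] //.
rewrite [h t.+1 X]/= [h t.+2 X]/=; case: ifP => hX //.
rewrite !trans_sum; apply: ler_sum => u _; apply: ler_sum => v _.
by apply: ler_wpM2l; [exact: coef_ge0 | exact: IH].
Qed.

Lemma h_mono_le s t X : (s <= t)%N -> h s X <= h t X.
Proof.
move=> /subnKC <-; elim: (t - s)%N => [|k IH]; rewrite ?addn0 // addnS.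
exact: le_trans IH (h_mono _ _).
Qed.

Definition good (Y : {set T}) := (Y :&: S)%SET != @finset.set0 T.

Lemma cross (X : {set T}) x y : x \in X -> y \notin X -> exists u v, [/\ v \in X, u \notin X & e v u].
Proof.
move=> hx hy.
case: (boolP [exists u, exists v, [&& v \in X, u \notin X & e v u]]).
  by move=> /existsP[u /existsP[v /and3P[? ? ?]]]; exists u, v.
move=> /negP H; exfalso.
have cl : fingraph.closed e X.
  move=> a b hab; apply/idP/idP => hh.
  - apply/negPn/negP => hb; apply: H; apply/existsP; exists b; apply/existsP; exists a.
    by rewrite hh hb hab.
  - apply/negPn/negP => ha; apply: H; apply/existsP; exists a; apply/existsP; exists b.
    by rewrite hh ha (esym b a) hab.
have := closed_connect cl (econn x y); rewrite hx (negbTE hy) //.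
Qed.

Definition bad (X : {set T}) u v := [&& u \in S, u \in X & v \notin X].
Definition pp : R := N^-1 * N^-1.
Definition eps : R := N ^+ 2 / (1 + delta).

Lemma upd_good X u v : good X -> ~~ bad X u v -> good (update X u v).
Proof.
rewrite /good /update => /set0Pn[x]; rewrite inE => /andP[xX xS] hb.
case: ifP => hv; apply/set0Pn; exists x; rewrite !inE ?xX ?xS ?orbT ?andbT //.
apply/eqP => exu; move: hb; by rewrite /bad -exu xS xX hv.
Qed.

Lemma bad_coef X u v : coef X u v * (bad X u v)%:R <= (1 + delta)^-1.
Proof.
rewrite /bad; case: (boolP (u \in S)) => uS; case: (boolP (u \in X)) => uX;
  case: (boolP (v \in X)) => vX /=; rewrite ?mulr0 ?invr_ge0 ?addr_ge0 // mulr1.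
have hn := norm_ge X u; rewrite {1}/bias uX uS /= in hn.
rewrite /coef {1}/bias (negbTE vX) /= mul1r.
apply: le_trans (_ : 1 / nm X u <= _).
  apply: ler_piMl; first by rewrite divr_ge0 ?ler01 ?(ltW (norm_gt0 _ _)).
  by rewrite invr_le1 ?unitfE ?pnatr_eq0 -?lt0n ?ler1n ?ltr0n.
rewrite mul1r lef_pV2 // posrE ?(norm_gt0 _ _) //.
by apply: lt_le_trans (ler_wpDr dpos (lexx 1)); rewrite ltr01.
Qed.

Lemma dsum_lin (f g k : T -> T -> R) :
  \sum_u \sum_(v | e v u) (f u v + g u v - k u v) =
  \sum_u \sum_(v | e v u) f u v + \sum_u \sum_(v | e v u) g u v
  - \sum_u \sum_(v | e v u) k u v.
Proof.
rewrite -big_split -sumrB; apply: eq_bigr => u _.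
by rewrite -big_split -sumrB.
Qed.

Lemma pt_sum (F : T -> T -> R) u0 v0 : e v0 u0 ->
  \sum_u \sum_(v | e v u) F u v * ((u == u0) && (v == v0))%:R = F u0 v0.
Proof.
move=> h0.
rewrite (bigD1 u0) //= (bigD1 v0) //= !eqxx /= mulr1 big1 ?addr0; last first.
  by move=> v /andP[_ /negbTE ->]; rewrite mulr0.
rewrite big1 ?addr0 // => u /negbTE hu; rewrite big1 // => v _.
by rewrite hu mulr0.
Qed.

Lemma coef_big (X : {set T}) u v : v \in X -> pp <= coef X u v.
Proof.
move=> vX; rewrite /pp /coef; apply: ler_wpM2l; first by rewrite invr_ge0 ler0n.
have N0 : 0 < N by rewrite ltr0n.
have b0 : 0 < bias S delta X v u by apply: lt_le_trans (bias_ge1 _ _ _); rewrite ltr01.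
have hn : nm X u <= N * bias S delta X v u.
  rewrite /norm_in; apply: le_trans (_ : _ <= \sum_(x : T) bias S delta X v u) _.
    rewrite big_mkcond /=; apply: ler_sum => x _.
    case: (e x u); last by rewrite (ltW b0).
    rewrite mulr1 /bias vX /=; case: (u \in S); case: (x \in X) => //=; by rewrite lerDl.
  by rewrite sumr_const -[X in X <= _]mulr_natl.
rewrite mulr1 ler_pdivlMr ?norm_gt0 // mulrC ler_pdivrMr // mulrC; exact: hn.
Qed.

Lemma bad_sum (X : {set T}) :
  \sum_u \sum_(v | e v u) coef X u v * (bad X u v)%:R <= eps.
Proof.
apply: le_trans (_ : _ <= \sum_(u : T) \sum_(v : T) (1 + delta)^-1) _.
  apply: ler_sum => u _; rewrite big_mkcond /=; apply: ler_sum => v _.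
  case: (e v u); first exact: bad_coef.
  by rewrite invr_ge0 addr_ge0.
rewrite (eq_bigr (fun _ => (1 + delta)^-1 *+ #|T|)); last by move=> u _; rewrite sumr_const.
rewrite sumr_const -[(1 + delta)^-1 *+ #|T|]mulr_natl -[X in X <= _]mulr_natl /eps.
by rewrite expr2 mulrA.
Qed.

Lemma pp_ge0 : 0 <= pp.
Proof. by rewrite /pp mulr_ge0 // invr_ge0 ler0n. Qed.

Lemma pp_le1 : pp <= 1.
Proof.
have h1 : N^-1 <= 1 by rewrite invr_le1 ?unitfE ?pnatr_eq0 -?lt0n ?ler1n ?ltr0n.
rewrite /pp; apply: le_trans (ler_piMl _ h1) h1; by rewrite invr_ge0 ler0n.
Qed.

Lemma eps_ge0 : 0 <= eps.
Proof. by rewrite /eps divr_ge0 ?exprn_ge0 ?ler0n ?addr_ge0. Qed.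

Lemma block c t : 0 <= c <= 1 -> (forall Y, good Y -> c <= h t Y) ->
  forall j X, good X -> (#|~: X| <= j)%N ->
  pp ^+ j + (1 - pp ^+ j) * c - j%:R * eps <= h (t + j) X.
Proof.
move=> /andP[c0 c1] hc; elim=> [|j IH] X gX hX.
  have -> : X = [set: T]%SET.
    apply/setP=> z; rewrite inE; apply/negPn/negP => hz.
    by move: hX; rewrite leqn0 => /eqP/cards0_eq/setP/(_ z); rewrite !inE hz.
  by rewrite addn0 h_full expr0 subrr mul0r addr0 mul0r subr0.
have p0 := pp_ge0; have p1 := pp_le1; have e0 := eps_ge0.
have pj0 : 0 <= pp ^+ j by rewrite exprn_ge0.
have pj1 : pp ^+ j <= 1 by rewrite exprn_ile1.
rewrite addnS exprS -addn1 natrD.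
case: (boolP (X == [set: T]%SET)) => [/eqP -> | nX].
  rewrite h_full.
  have : 0 <= (1 - pp * pp ^+ j) * (1 - c) by rewrite mulr_ge0 // subr_ge0 // mulr_ile1.
  have : 0 <= (j%:R + 1) * eps by rewrite mulr_ge0 // addr_ge0.
  nra.
rewrite h_step //.
case/set0Pn: (gX) => x; rewrite inE => /andP[xX xS].
have [y hy] : exists y, y \notin X.
  case: (pickP (fun y => y \notin X)) => [y hy | hall]; first by exists y.
  by move: nX => /eqP; case; apply/setP => z; rewrite !inE; apply/negbFE/hall.
have [u0 [v0 [vX uX evu]]] := cross X x y xX hy.
have Y0E : update X u0 v0 = (u0 |: X)%SET by rewrite /update vX.
have gY : good (update X u0 v0).
  by rewrite Y0E; apply/set0Pn; exists x; rewrite !inE xX xS orbT.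
have cY : (#|~: update X u0 v0| <= j)%N.
  move: hX; rewrite Y0E (cardsD1 u0 (~: X)) inE uX add1n ltnS.
  suff -> : (~: X :\ u0)%SET = (~: (u0 |: X))%SET by [].
  by apply/setP => z; rewrite !inE negb_or andbC.
have hA := IH _ gY cY.
have hc' : c <= h (t + j) (update X u0 v0).
  exact: le_trans (hc _ gY) (h_mono_le _ _ _ (leq_addr j t)).
set H := h (t + j) (update X u0 v0) in hA hc' *.
have pw : forall u v, c + ((u == u0) && (v == v0))%:R * (H - c) - (bad X u v)%:R
                     <= h (t + j) (update X u v).
  move=> u v; case: (boolP ((u == u0) && (v == v0))) => [/andP[/eqP-> /eqP->] | nI].
    have -> : bad X u0 v0 = false by rewrite /bad vX !andbF.
    by rewrite /= mulr1n mul1r subr0 addrC subrK.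
  rewrite /= mulr0n mul0r addr0; case: (boolP (bad X u v)) => hb.
    apply: le_trans (_ : 0 <= _); first by rewrite /= mulr1n subr_le0.
    by case/andP: (h_bnd (t + j) (update X u v)).
  rewrite /= mulr0n subr0.
  exact: le_trans (hc _ (upd_good X u v gX hb)) (h_mono_le _ _ _ (leq_addr j t)).
have key : \sum_u \sum_(v | e v u)
      coef X u v * (c + ((u == u0) && (v == v0))%:R * (H - c) - (bad X u v)%:R)
    <= \sum_u \sum_(v | e v u) coef X u v * h (t + j) (update X u v).
  apply: ler_sum => u _; apply: ler_sum => v _.
  by apply: ler_wpM2l; [exact: coef_ge0 | exact: pw].
have lin : \sum_u \sum_(v | e v u)
      coef X u v * (c + ((u == u0) && (v == v0))%:R * (H - c) - (bad X u v)%:R)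
    = c + coef X u0 v0 * (H - c)
      - \sum_u \sum_(v | e v u) coef X u v * (bad X u v)%:R.
  rewrite (eq_bigr (fun u => \sum_(v | e v u) (coef X u v * c
        + (coef X u v * (H - c)) * ((u == u0) && (v == v0))%:R
        - coef X u v * (bad X u v)%:R))); last first.
    by move=> u _; apply: eq_bigr => v _; ring.
  rewrite dsum_lin (pt_sum (fun u v => coef X u v * (H - c))) //.
  congr (_ + _ - _).
  have cs := coef_sum X hT.
  transitivity ((\sum_u \sum_(v | e v u) coef X u v) * c); last by rewrite cs mul1r.
  by rewrite mulr_suml; apply: eq_bigr => u _; rewrite mulr_suml.
rewrite lin in key.
have bs := bad_sum X.
have cb := coef_big X u0 v0 vX.
have h1 : pp * (H - c) <= coef X u0 v0 * (H - c).
  by apply: ler_wpM2r; rewrite ?subr_ge0.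
have h3 : pp * (pp ^+ j + (1 - pp ^+ j) * c - j%:R * eps - c) <= pp * (H - c).
  by apply: ler_wpM2l => //; rewrite lerD2r.
have h4 : 0 <= (1 - pp) * (j%:R * eps) by rewrite mulr_ge0 ?subr_ge0 // mulr_ge0.
nra.
Qed.

Lemma iterk k Y : good Y ->
  1 - (1 - pp ^+ #|T|) ^+ k - k%:R * (N * eps) <= h (k * #|T|) Y.
Proof.
set q := pp ^+ #|T|.
have q0 : 0 <= q by rewrite exprn_ge0 // pp_ge0.
have q1 : q <= 1 by rewrite exprn_ile1 // ?pp_ge0 ?pp_le1.
have e0 := eps_ge0.
have N0 : 0 <= N by rewrite ler0n.
elim: k Y => [|k IH] Y gY.
  by rewrite expr0 subrr mul0r subr0; case/andP: (h_bnd 0 Y).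
set g := 1 - (1 - q) ^+ k - k%:R * (N * eps).
have qk0 : 0 <= (1 - q) ^+ k by rewrite exprn_ge0 // subr_ge0.
have gl1 : g <= 1.
  rewrite /g; have : 0 <= k%:R * (N * eps) by apply: mulr_ge0; [exact: ler0n | exact: mulr_ge0].
  lra.
have m01 : 0 <= Num.max 0 g <= 1 by rewrite le_max lexx /= ge_max ler01 gl1.
have mh : forall Z, good Z -> Num.max 0 g <= h (k * #|T|) Z.
  move=> Z gZ; rewrite ge_max; apply/andP; split; first by case/andP: (h_bnd (k * #|T|) Z).
  exact: IH.
have := @block (Num.max 0 g) (k * #|T|) m01 mh #|T| Y gY (max_card _).
rewrite mulSnr => hb; apply: le_trans hb.
have gm : g <= Num.max 0 g by rewrite le_max lexx orbT.
have : (1 - q) * g <= (1 - q) * Num.max 0 g by apply: ler_wpM2l; rewrite ?subr_ge0.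
have : 0 <= q * (k%:R * (N * eps)).
  by apply: mulr_ge0 => //; apply: mulr_ge0; rewrite ?ler0n //; apply: mulr_ge0; rewrite ?ler0n.
rewrite -/q exprS -addn1 natrD /g; nra.
Qed.

Lemma fp_bnd t X : h t X <= fp e W S delta X <= 1.
Proof.
have homo : {homo (fun t => h t X) : n m / (n <= m)%N >-> n <= m}.
  by move=> n m nm; exact: h_mono_le.
have ub : has_ubound (range (fun t => h t X)).
  by exists 1 => _ [s _ <-]; case/andP: (h_bnd s X).
have cv := nondecreasing_is_cvgn homo ub.
apply/andP; split; first exact: (nondecreasing_cvgn_le homo cv).
apply: limr_le => //; apply: nearW => s; by case/andP: (h_bnd s X).
Qed.
End PV.

Lemma bern (R : realType) (a : R) k : 0 <= a -> a <= 1 ->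
  (1 - a) ^+ k * (1 + k%:R * a) <= 1.
Proof.
move=> a0 a1; elim: k => [|k IH]; first by rewrite expr0 mul0r addr0 mul1r.
have x0 : 0 <= (1 - a) ^+ k by rewrite exprn_ge0 // subr_ge0.
have : 0 <= (1 - a) ^+ k * (a * a) * (k%:R + 1).
  by rewrite mulr_ge0 ?addr_ge0 ?ler0n // mulr_ge0 // mulr_ge0.
rewrite exprS -addn1 natrD; nra.
Qed.

Local Open Scope classical_set_scope.

Theorem mainTheorem3 (R : realType) (T : finType) (e : rel T)
    (S X : {set T}) :
  undirected_selfloop_connected e ->
  (X :&: S)%SET != @finset.set0 T ->
  fp e (fun _ _ => 1) S delta X @[delta --> +oo] --> (1 : R).
Proof.
case=> esym [erefl' econn] hXS.
have hT : (0 < #|T|)%N.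
  by case/set0Pn: hXS => x _; apply/card_gt0P; exists x.
apply/cvgrPdist_lt => eta eta0.
set N : R := #|T|%:R.
have N0 : 0 < N by rewrite ltr0n.
set q : R := pp R T ^+ #|T|.
have p0 : 0 < pp R T by rewrite /pp mulr_gt0 // invr_gt0.
have q0 : 0 < q by rewrite exprn_gt0.
have q1 : q <= 1 by rewrite exprn_ile1 ?(ltW p0) ?(pp_le1 R T hT).
set k := (Num.truncn (2 / (q * eta))).+1.
have hk : 2 / (q * eta) < k%:R by exact: truncnS_gt.
have hkq : 2 < k%:R * (q * eta) by rewrite -ltr_pdivrMr // mulr_gt0.
have hb := @bern R q k (ltW q0) q1.
have x0 : 0 <= (1 - q) ^+ k by rewrite exprn_ge0 // subr_ge0.
have hgeo : (1 - q) ^+ k < eta / 2.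
  have : 0 <= (1 - q) ^+ k * (k%:R * q) by rewrite mulr_ge0 // mulr_ge0 ?ler0n // ltW.
  nra.
set M : R := 2 * k%:R * N ^+ 3 / eta.
have M0 : 0 <= M by rewrite /M divr_ge0 ?(ltW eta0) // !mulr_ge0 ?ler0n // exprn_ge0 // ltW.
apply: filterS (nbhs_pinfty_gt (num_real M)) => d hd.
have d0 : 0 <= d by apply: ltW; apply: le_lt_trans hd.
have hlow := iterk R T e S d erefl' d0 hT esym econn k X hXS.
have /andP[hf1 hf2] := fp_bnd R T e S d erefl' d0 hT (k * #|T|) X.
have heps : k%:R * (N * eps R T d) < eta / 2.
  have -> : k%:R * (N * eps R T d) = (k%:R * N ^+ 3) / (1 + d) by rewrite /eps /N; ring.
  have d1 : 0 < 1 + d by apply: lt_le_trans (ler_wpDr d0 (lexx 1)); rewrite ltr01.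
  rewrite ltr_pdivrMr //.
  move: hd; rewrite /M ltr_pdivrMr // => hd.
  nra.
rewrite ger0_norm; last by rewrite subr_ge0.
rewrite -/N -/q in hlow.
lra.
Qed.
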